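(* Let $\mathcal{P}$ be a topological property that is closed hereditary (i.e., every closed subspace of a space with $\mathcal{P}$ has $\mathcal{P}$). If a topological space $X$ is dense-$\mathcal{P}$, then $X$ is hereditarily $\mathcal{P}$, i.e., every subspace of $X$ has $\mathcal{P}$.
   Context: For a topological property $\mathcal{P}$, a space $X$ is called dense-$\mathcal{P}$ if every dense subset of $X$ (with the subspace topology) has $\mathcal{P}$. No separation axioms are assumed. *)

(* Defs.v *)
Definition is_topology {X : Type} (O : (X -> Prop) -> Prop) : Prop :=
  O (fun _ => True) /\
  (forall U V, O U -> O V -> O (fun x => U x /\ V x)) /\
  (forall F : (X -> Prop) -> Prop,
      (forall U, F U -> O U) -> O (fun x => exists U, F U /\ U x)).

Definition is_closed {X : Type} (O : (X -> Prop) -> Prop) (C : X -> Prop) : Prop :=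
  O (fun x => ~ C x).

Definition closure {X : Type} (O : (X -> Prop) -> Prop) (A : X -> Prop) : X -> Prop :=
  fun x => forall C, is_closed O C -> (forall y, A y -> C y) -> C x.

Definition dense {X : Type} (O : (X -> Prop) -> Prop) (A : X -> Prop) : Prop :=
  forall x, closure O A x.

Definition subspace {X : Type} (O : (X -> Prop) -> Prop) (A : X -> Prop)
  : ({x | A x} -> Prop) -> Prop :=
  fun V => exists U, O U /\ forall y : {x | A x}, V y <-> U (proj1_sig y).

Definition continuous {X Y : Type} (OX : (X -> Prop) -> Prop)
  (OY : (Y -> Prop) -> Prop) (f : X -> Y) : Prop :=
  forall V, OY V -> OX (fun x => V (f x)).

Definition homeomorphic {X Y : Type} (OX : (X -> Prop) -> Prop)
  (OY : (Y -> Prop) -> Prop) : Prop :=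
  exists (f : X -> Y) (g : Y -> X),
    (forall x, g (f x) = x) /\ (forall y, f (g y) = y) /\
    continuous OX OY f /\ continuous OY OX g.

Definition space_property : Type :=
  forall X : Type, ((X -> Prop) -> Prop) -> Prop.

Definition topological_property (P : space_property) : Prop :=
  forall (X Y : Type) (OX : (X -> Prop) -> Prop) (OY : (Y -> Prop) -> Prop),
    is_topology OX -> is_topology OY -> homeomorphic OX OY ->
    P X OX -> P Y OY.

Definition closed_hereditary (P : space_property) : Prop :=
  forall (X : Type) (O : (X -> Prop) -> Prop) (C : X -> Prop),
    is_topology O -> P X O -> is_closed O C -> P {x | C x} (subspace O C).

Definition dense_P (P : space_property) (X : Type) (O : (X -> Prop) -> Prop) : Prop :=
  forall D : X -> Prop, dense O D -> P {x | D x} (subspace O D).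

Definition hereditarily_P (P : space_property) (X : Type) (O : (X -> Prop) -> Prop) : Prop :=
  forall A : X -> Prop, P {x | A x} (subspace O A).

(* Main.v *)
Require Import Defs.
From Stdlib Require Import Classical ProofIrrelevance FunctionalExtensionality PropExtensionality.

Lemma subspace_top {X : Type} (O : (X -> Prop) -> Prop) (A : X -> Prop) :
  is_topology O -> is_topology (subspace O A).
Proof.
  intros [HT [HI HU]]. split; [|split].
  - exists (fun _ => True). split; [exact HT| intros; tauto].
  - intros U V [U1 [HU1 E1]] [V1 [HV1 E2]].
    exists (fun x => U1 x /\ V1 x). split; [apply HI; auto|].
    intro y. rewrite E1, E2. tauto.
  - intros F HF.
    exists (fun x => exists U, (O U /\ exists V, F V /\ forall y, V y <-> U (proj1_sig y)) /\ U x).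
    split.
    + apply HU. intros U [H _]; exact H.
    + intro y; split.
      * intros [V [FV Vy]]. destruct (HF V FV) as [U [OU E]].
        exists U. split; [split; [exact OU| exists V; split; auto]|]. apply E; exact Vy.
      * intros [U [[_ [V [FV E]]] Uy]]. exists V. split; auto. apply E; exact Uy.
Qed.

Lemma closure_closed {X : Type} (O : (X -> Prop) -> Prop) (A : X -> Prop) :
  is_topology O -> O (fun x => ~ closure O A x).
Proof.
  intros [_ [_ HU]].
  set (F := fun U : X -> Prop => exists C, is_closed O C /\ (forall y, A y -> C y) /\ U = (fun x => ~ C x)).
  assert (H : O (fun x => exists U, F U /\ U x)).
  { apply HU. intros U [C [HC [_ ->]]]. exact HC. }
  replace (fun x => ~ closure O A x) with (fun x => exists U, F U /\ U x); [exact H|].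
  apply functional_extensionality; intro x; apply propositional_extensionality; split.
  - intros [U [[C [HC [HAC ->]]] Ux]] Hcl. apply Ux. apply Hcl; auto.
  - intro Hn. unfold closure in Hn.
    apply not_all_ex_not in Hn as [C Hn].
    apply imply_to_and in Hn as [HC Hn]. apply imply_to_and in Hn as [HAC Hn].
    exists (fun x => ~ C x). split; [exists C; auto| exact Hn].
Qed.

Theorem theorem2p1 (P : space_property)
  (HPtop : topological_property P) (HPch : closed_hereditary P)
  (X : Type) (O : (X -> Prop) -> Prop) (HO : is_topology O) :
  dense_P P X O -> hereditarily_P P X O.
Proof.
  intros Hd A.
  set (D := fun x => A x \/ ~ closure O A x).
  assert (HD : dense O D).
  { intros x C HC HDC. destruct (classic (closure O A x)) as [Hx|Hx].
    - apply Hx; auto. intros y Ay. apply HDC. left; exact Ay.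
    - apply HDC. right; exact Hx. }
  pose proof (Hd D HD) as PD.
  set (C' := fun y : {x | D x} => A (proj1_sig y)).
  assert (HC' : is_closed (subspace O D) C').
  { exists (fun x => ~ closure O A x). split; [apply closure_closed; auto|].
    intros [y Dy]; unfold C'; simpl. split.
    - intro nA. destruct Dy as [Ay|Hy]; [contradiction|exact Hy].
    - intros Hn Ay. apply Hn. intros C _ HAC. auto. }
  pose proof (HPch _ _ C' (subspace_top O D HO) PD HC') as PC.
  refine (HPtop _ _ _ _ (subspace_top _ _ (subspace_top O D HO)) (subspace_top O A HO) _ PC).
  exists (fun z : {y : {x | D x} | C' y} => exist A (proj1_sig (proj1_sig z)) (proj2_sig z)).
  exists (fun a : {x | A x} => exist C' (exist D (proj1_sig a) (or_introl (proj2_sig a))) (proj2_sig a)).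
  split; [|split; [|split]].
  - intros [[x Dx] Ax]. unfold C' in Ax; simpl in *.
    assert (E : or_introl Ax = Dx) by apply proof_irrelevance. subst Dx. reflexivity.
  - intros [x Ax]. reflexivity.
  - intros V [U [OU E]]. exists (fun y : {x | D x} => U (proj1_sig y)). split.
    + exists U. split; [exact OU| intro; tauto].
    + intro z. rewrite E. simpl. tauto.
  - intros V [U' [[U [OU E1]] E2]]. exists U. split; [exact OU|].
    intros [x Ax]. rewrite E2, E1. simpl. tauto.
Qed.
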